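(* Let $d\ge 1$, $k\ge1$ and let $(\vec n)$ be a $d\times k$ matrix of nonnegative integers. If $k\le d$, then for all $0<\epsilon<L$ the modified analytic weight $\widetilde W^{k,(\vec n)}_{\epsilon<L}$ is identically zero as a distribution on $(\mathbb{C}^d)^k$; indeed the form $\left(\frac{\partial}{\partial z^k}\right)^{\vec n^k}K^{an}_\epsilon(z^1,z^k)\prod_{\alpha=1}^{k-1}\left(\frac{\partial}{\partial z^\alpha}\right)^{\vec n^\alpha}P^{an}_{\epsilon<L}(z^\alpha,z^{\alpha+1})$ vanishes identically.
   Context: On $(\mathbb{C}^d)^k$ use coordinates $z^\alpha=(z^\alpha_1,\dots,z^\alpha_d)$ and $d^dz^\alpha=dz^\alpha_1\wedge\cdots\wedge dz^\alpha_d$. Analytic heat kernel: $K^{an}_t(z,w)=(2\pi i t)^{-d}e^{-|z-w|^2/4t}\prod_{i=1}^d(d\bar z_i-d\bar w_i)$ for $t>0$. Analytic propagator: $P^{an}_{\epsilon<L}(z,w)=\int_\epsilon^L dt\,(2\pi i t)^{-d}\sum_{j=1}^d(-1)^{j-1}\frac{\bar z_j-\bar w_j}{4t}e^{-|z-w|^2/4t}\prod_{i\neq j}(d\bar z_i-d\bar w_i)$. Write $\left(\frac{\partial}{\partial z^\alpha}\right)^{\vec n^\alpha}=\prod_{i=1}^d\frac{\partial^{n^\alpha_i}}{\partial (z^\alpha_i)^{n^\alpha_i}}$. The modified analytic weight is the distribution on $\Phi\in\Omega^{0,*}_c((\mathbb{C}^d)^k)$ $$\widetilde W^{k,(\vec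 n)}_{\epsilon<L}(\Phi)=\int_{(\mathbb{C}^d)^k}\prod_{\alpha=1}^k d^dz^\alpha\,\Phi\,\left(\frac{\partial}{\partial z^k}\right)^{\vec n^k}K^{an}_\epsilon(z^1,z^k)\prod_{\alpha=1}^{k-1}\left(\frac{\partial}{\partial z^\alpha}\right)^{\vec n^\alpha}P^{an}_{\epsilon<L}(z^\alpha,z^{\alpha+1}),$$ integrating the top-degree component. *)

(* Defs.v *)
From Stdlib Require Import Reals ZArith List Sorted Arith ClassicalEpsilon.
Import ListNotations.
Open Scope R_scope.

Definition C : Type := (R * R)%type.
Definition C0 : C := (0, 0).
Definition C1 : C := (1, 0).
Definition Cadd (z w : C) : C := (fst z + fst w, snd z + snd w).
Definition Copp (z : C) : C := (- fst z, - snd z).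
Definition Csub (z w : C) : C := Cadd z (Copp w).
Definition Cmul (z w : C) : C :=
  (fst z * fst w - snd z * snd w, fst z * snd w + snd z * fst w).
Definition Cconj (z : C) : C := (fst z, - snd z).
Definition Cnorm2 (z : C) : R := fst z * fst z + snd z * snd z.
Definition Cinv (z : C) : C := (fst z / Cnorm2 z, - snd z / Cnorm2 z).
Definition Cscal (r : R) (z : C) : C := (r * fst z, r * snd z).
Fixpoint Cpow (z : C) (m : nat) : C :=
  match m with O => C1 | S m' => Cmul z (Cpow z m') end.
Definition CofZ (x : Z) : C := (IZR x, 0).
Definition Csum (l : list C) : C := fold_right Cadd C0 l.
Definition Rsum (l : list R) : R := fold_right Rplus 0 l.

(* a point of C^d : coordinates i = 0..d-1 (paper: i = 1..d) *)
Definition pt : Type := nat -> C.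
(* a configuration in (C^d)^k : Z a i = z^{a+1}_{i+1}, a < k, i < d *)
Definition config : Type := nat -> nat -> C.

Definition dist2 (d : nat) (z w : pt) : R :=
  Rsum (map (fun i => Cnorm2 (Csub (z i) (w i))) (seq 0 d)).

Definition RInt (f : R -> R) (a b : R) : R :=
  match excluded_middle_informative (inhabited (Riemann_integrable f a b)) with
  | left H => RiemannInt (epsilon H (fun _ => True))
  | right _ => 0
  end.
Definition CInt (f : R -> C) (a b : R) : C :=
  (RInt (fun t => fst (f t)) a b, RInt (fun t => snd (f t)) a b).

Definition RlineInt (f : R -> R) : R :=
  epsilon (inhabits 0) (fun l => forall e, 0 < e -> exists M, forall Rr, Rr > M ->
      Rabs (RInt f (- Rr) Rr - l) < e).

Definition Rderiv (g : R -> R) (x : R) : R :=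
  epsilon (inhabits 0) (fun l => derivable_pt_lim g x l).

Definition cupd (Z : config) (a i : nat) (c : C) : config :=
  fun b l => if andb (Nat.eqb b a) (Nat.eqb l i) then c else Z b l.

Definition Dx (a i : nat) (F : config -> C) (Z : config) : C :=
  let g := fun s => F (cupd Z a i (s, snd (Z a i))) in
  (Rderiv (fun s => fst (g s)) (fst (Z a i)), Rderiv (fun s => snd (g s)) (fst (Z a i))).
Definition Dy (a i : nat) (F : config -> C) (Z : config) : C :=
  let g := fun s => F (cupd Z a i (fst (Z a i), s)) in
  (Rderiv (fun s => fst (g s)) (snd (Z a i)), Rderiv (fun s => snd (g s)) (snd (Z a i))).
Definition Dz (a i : nat) (F : config -> C) : config -> C :=
  fun Z => Cscal (/2) (Cadd (Dx a i F Z) (Cmul (0, -1) (Dy a i F Z))).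
(* (d/dz^a)^{nvec} = prod_{i<d} d^{nvec i}/d(z^a_i)^{nvec i} *)
Definition Dmulti (d a : nat) (nvec : nat -> nat) (F : config -> C) : config -> C :=
  fold_right (fun i G => Nat.iter (nvec i) (Dz a i) G) F (seq 0 d).

(* generator dzbar^a_i has index a*d + i *)
Definition gidx (d a i : nat) : nat := (a * d + i)%nat.
(* constant-coefficient (0,1)-form: integer coefficient of each generator *)
Definition oneform : Type := nat -> Z.
(* dzbar^a_i - dzbar^b_i *)
Definition diff1 (d a b i : nat) : oneform := fun g =>
  ((if Nat.eqb g (gidx d a i) then 1 else 0) - (if Nat.eqb g (gidx d b i) then 1 else 0))%Z.

Fixpoint remove_nth (m : nat) (l : list nat) : list nat :=
  match l, m with
  | [], _ => []
  | _ :: l', O => l'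
  | x :: l', S m' => x :: remove_nth m' l'
  end.

(* component of v1 ^ ... ^ vm along dzbar_{S_1} ^ ... ^ dzbar_{S_p}
   (Laplace expansion of the determinant; 0 unless m = p) *)
Fixpoint ext (vs : list oneform) (S : list nat) : Z :=
  match vs with
  | [] => match S with [] => 1%Z | _ => 0%Z end
  | v :: vs' =>
      fold_right Z.add 0%Z
        (map (fun b => ((-1) ^ Z.of_nat b * v (nth b S O) * ext vs' (remove_nth b S))%Z)
             (seq 0 (length S)))
  end.

(* a (0,q)-form at a point: finite sum of  coefficient * (wedge of 1-forms) *)
Definition pform : Type := list (C * list oneform).
Definition wedge (w1 w2 : pform) : pform :=
  flat_map (fun p => map (fun q => (Cmul (fst p) (fst q), snd p ++ snd q)) w2) w1.
(* coefficient of dzbar_{S_1} ^ ... ^ dzbar_{S_p} *)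
Definition form_comp (w : pform) (S : list nat) : C :=
  Csum (map (fun p => Cmul (fst p) (CofZ (ext (snd p) S))) w).

Definition prefac (d : nat) (t : R) : C := Cinv (Cpow (0, 2 * PI * t) d).

Definition Kcoef (d : nat) (t : R) (z w : pt) : C :=
  Cmul (prefac d t) (exp (- dist2 d z w / (4 * t)), 0).

(* integrand of the j-th scalar coefficient of P^an (j 0-based: sign (-1)^j) *)
Definition Pintegrand (d j : nat) (t : R) (z w : pt) : C :=
  Cmul (prefac d t)
   (Cmul (Cscal ((-1) ^ j / (4 * t)) (Csub (Cconj (z j)) (Cconj (w j))))
         (exp (- dist2 d z w / (4 * t)), 0)).
Definition Pcoef (d : nat) (eps L : R) (j : nat) (z w : pt) : C :=
  CInt (fun t => Pintegrand d j t z w) eps L.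

(* (d/dz^k)^{n^k} K^an_eps(z^1, z^k) ; nmat a i = n^{a+1}_{i+1} *)
Definition Kform (d k : nat) (eps : R) (nmat : nat -> nat -> nat) (Z : config) : pform :=
  [ (Dmulti d (k - 1) (nmat (k - 1)%nat)
        (fun Y => Kcoef d eps (Y O) (Y (k - 1)%nat)) Z,
     map (fun i => diff1 d O (k - 1) i) (seq 0 d)) ].

Definition Pform (d : nat) (eps L : R) (nmat : nat -> nat -> nat) (a : nat) (Z : config)
  : pform :=
  map (fun j =>
     (Dmulti d a (nmat a) (fun Y => Pcoef d eps L j (Y a) (Y (S a))) Z,
      map (fun i => diff1 d a (S a) i) (filter (fun i => negb (Nat.eqb i j)) (seq 0 d))))
   (seq 0 d).

(* the form  (d/dz^k)^{n^k}K ^ prod_{a=1}^{k-1} (d/dz^a)^{n^a} P(z^a,z^{a+1}) *)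
Definition Omega (d k : nat) (eps L : R) (nmat : nat -> nat -> nat) (Z : config) : pform :=
  fold_left (fun acc a => wedge acc (Pform d eps L nmat a Z)) (seq 0 (k - 1))
            (Kform d k eps nmat Z).

Fixpoint sublists (l : list nat) : list (list nat) :=
  match l with
  | [] => [[]]
  | x :: l' => map (cons x) (sublists l') ++ sublists l'
  end.
Definition complement (N : nat) (S : list nat) : list nat :=
  filter (fun g => negb (existsb (Nat.eqb g) S)) (seq 0 N).
(* sign of the shuffle  S ++ complement -> increasing order *)
Definition shuffle_sign (N : nat) (S : list nat) : C :=
  CofZ ((-1) ^ Z.of_nat (length
     (flat_map (fun a => filter (fun b => Nat.ltb b a) (complement N S)) S)))%Z.

(* a (0,q)-form on (C^d)^k: Phi S Z = coefficient of dzbar_S (S increasing) at Z *)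
Definition form0 : Type := list nat -> config -> C.

(* top dzbar-coefficient of Phi ^ Omega *)
Definition top_coef (d k : nat) (eps L : R) (nmat : nat -> nat -> nat) (Phi : form0)
  (Z : config) : C :=
  let N := (k * d)%nat in
  Csum (map (fun S => Cmul (shuffle_sign N S)
                       (Cmul (Phi S Z) (form_comp (Omega d k eps L nmat Z) (complement N S))))
            (sublists (seq 0 N))).

Fixpoint IntAll (F : config -> R) (coords : list (nat * nat * bool)) (Z : config) : R :=
  match coords with
  | [] => F Z
  | (a, i, re) :: cs =>
      RlineInt (fun s => IntAll F cs
        (cupd Z a i (if re then (s, snd (Z a i)) else (fst (Z a i), s))))
  end.
Definition all_coords (d k : nat) : list (nat * nat * bool) :=
  flat_map (fun a => flat_map (fun i => [(a, i, true); (a, i, false)]) (seq 0 d)) (seq 0 k).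

Definition Wtilde (d k : nat) (eps L : R) (nmat : nat -> nat -> nat) (Phi : form0) : C :=
  (IntAll (fun Z => fst (top_coef d k eps L nmat Phi Z)) (all_coords d k) (fun _ _ => C0),
   IntAll (fun Z => snd (top_coef d k eps L nmat Phi Z)) (all_coords d k) (fun _ _ => C0)).

Definition compact_support (d k : nat) (Phi : form0) : Prop :=
  exists Rb : R, forall S Z, Phi S Z <> C0 ->
    forall a i, (a < k)%nat -> (i < d)%nat ->
      Rabs (fst (Z a i)) <= Rb /\ Rabs (snd (Z a i)) <= Rb.

(* Main.v *)
Require Import Defs.
From Stdlib Require Import Reals ZArith List Sorted Arith.
From Stdlib Require Import Lia Lra FunctionalExtensionality ClassicalEpsilon.
Open Scope R_scope.

Definition sumZ (f : nat -> Z) (l : list nat) : Z := fold_right Z.add 0%Z (map f l).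
Definition sgn (n : nat) : Z := ((-1) ^ Z.of_nat n)%Z.

Lemma sgn_S n : sgn (S n) = (- sgn n)%Z.
Proof. unfold sgn. rewrite Nat2Z.inj_succ, Z.pow_succ_r by lia. ring. Qed.

Lemma sumZ_ext f g l : (forall b, In b l -> f b = g b) -> sumZ f l = sumZ g l.
Proof.
  induction l as [|x l IH]; intros H; simpl; auto.
  unfold sumZ in *; simpl. rewrite H by (left; auto). rewrite IH; auto.
  intros; apply H; right; auto.
Qed.

Lemma sumZ_lin x y f g l :
  sumZ (fun b => x * f b + y * g b)%Z l = (x * sumZ f l + y * sumZ g l)%Z.
Proof. induction l; unfold sumZ in *; simpl; [ring|]. rewrite IHl. ring. Qed.

Lemma sumZ_scal c f l : sumZ (fun b => c * f b)%Z l = (c * sumZ f l)%Z.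
Proof. induction l; unfold sumZ in *; simpl; [ring|]. rewrite IHl. ring. Qed.

Lemma sumZ_sub f g l : sumZ (fun b => f b - g b)%Z l = (sumZ f l - sumZ g l)%Z.
Proof. induction l; unfold sumZ in *; simpl; [ring|]. rewrite IHl. ring. Qed.

Lemma sumZ_app f l1 l2 : sumZ f (l1 ++ l2) = (sumZ f l1 + sumZ f l2)%Z.
Proof. induction l1; unfold sumZ in *; simpl; [ring|]. rewrite IHl1. ring. Qed.

Lemma sumZ_zero f l : (forall b, In b l -> f b = 0%Z) -> sumZ f l = 0%Z.
Proof.
  intros H. rewrite (sumZ_ext f (fun b => 0 * f b)%Z).
  - rewrite sumZ_scal. ring.
  - intros b Hb. rewrite H; auto.
Qed.

Lemma ext_cons v vs S :
  ext (v :: vs) S =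
  sumZ (fun b => sgn b * v (nth b S O) * ext vs (remove_nth b S))%Z (seq 0 (length S)).
Proof. reflexivity. Qed.

Lemma nth_rm_lt l : forall b c, (c < b)%nat -> nth c (remove_nth b l) O = nth c l O.
Proof.
  induction l as [|x l IH]; intros b c H; [destruct b; reflexivity|].
  destruct b; [lia|]. destruct c; simpl; auto. apply IH; lia.
Qed.

Lemma nth_rm_ge l : forall b c, (b <= c)%nat -> nth c (remove_nth b l) O = nth (S c) l O.
Proof.
  induction l as [|x l IH]; intros b c H.
  - destruct b, c; reflexivity.
  - destruct b; simpl; auto. destruct c; [lia|]. apply IH; lia.
Qed.

Lemma rm_rm l : forall b c, (b <= c)%nat ->
  remove_nth c (remove_nth b l) = remove_nth b (remove_nth (S c) l).
Proof.
  induction l as [|x l IH]; intros b c H; [destruct b, c; reflexivity|].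
  destruct b; simpl; auto. destruct c; [lia|]. simpl. f_equal. apply IH; lia.
Qed.

Lemma length_rm l : forall b, (b < length l)%nat -> length (remove_nth b l) = (length l - 1)%nat.
Proof.
  induction l as [|x l IH]; intros b H; simpl in *; [lia|].
  destruct b; simpl; [lia|]. rewrite IH by lia. lia.
Qed.

Lemma sumZ_seq_S f a m : sumZ f (seq a (S m)) = (sumZ f (seq a m) + f (a + m)%nat)%Z.
Proof. rewrite seq_S, sumZ_app. unfold sumZ at 2. simpl. ring. Qed.

Lemma tri n (g : nat -> nat -> Z) :
  sumZ (fun b => sumZ (fun c => g b c) (seq 0 b)) (seq 0 n) =
  sumZ (fun c => sumZ (fun b' => g (S b') c) (seq c (n - 1 - c))) (seq 0 n).
Proof.
  induction n.
  - reflexivity.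
  - rewrite !sumZ_seq_S. simpl (0 + n)%nat. rewrite IHn.
    replace (S n - 1 - n)%nat with O by lia.
    change (sumZ (fun b' => g (S b') n) (seq n 0)) with 0%Z.
    rewrite (sumZ_ext (fun c => sumZ (fun b' => g (S b') c) (seq c (S n - 1 - c)))
       (fun c => 1 * sumZ (fun b' => g (S b') c) (seq c (n - 1 - c)) + 1 * g n c)%Z).
    + rewrite (sumZ_lin 1 1 (fun c => sumZ (fun b' => g (S b') c) (seq c (n - 1 - c))) (fun c => g n c)). ring.
    + intros c Hc. apply in_seq in Hc.
      replace (S n - 1 - c)%nat with (S (n - 1 - c)) by lia.
      rewrite sumZ_seq_S. replace (S (c + (n - 1 - c)))%nat with n by lia. ring.
Qed.

Section Swap.
Variables (u v : oneform) (vs : list oneform) (l : list nat).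

Definition Gf (x y : oneform) (b c : nat) : Z :=
  (sgn b * sgn c * x (nth b l O) * y (nth c l O) * ext vs (remove_nth c (remove_nth b l)))%Z.
Definition Xf (x y : oneform) : Z :=
  sumZ (fun b => sumZ (fun c => Gf x y b c) (seq 0 b)) (seq 0 (length l)).

Lemma ext_two : ext (u :: v :: vs) l = (Xf u v - Xf v u)%Z.
Proof.
  unfold Xf. rewrite (tri (length l) (Gf v u)). rewrite <- sumZ_sub. rewrite ext_cons.
  apply sumZ_ext. intros b Hb. apply in_seq in Hb.
  rewrite ext_cons. rewrite length_rm by lia.
  rewrite <- sumZ_scal.
  replace (length l - 1)%nat with (b + (length l - 1 - b))%nat at 1 by lia.
  rewrite seq_app, sumZ_app. simpl (0 + b)%nat.
  rewrite (sumZ_ext _ (fun c => Gf u v b c) (seq 0 b)).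
  2:{ intros c Hc; apply in_seq in Hc.
      rewrite nth_rm_lt by lia. unfold Gf. ring. }
  rewrite (sumZ_ext _ (fun c => -1 * Gf v u (S c) b)%Z (seq b (length l - 1 - b))).
  2:{ intros c Hc; apply in_seq in Hc.
      rewrite nth_rm_ge by lia. rewrite rm_rm by lia. unfold Gf. rewrite sgn_S. ring. }
  rewrite sumZ_scal. ring.
Qed.
End Swap.

Lemma swap_top (u v : oneform) (vs : list oneform) (l : list nat) : ext (u :: v :: vs) l = (- ext (v :: u :: vs) l)%Z.
Proof. rewrite !ext_two. ring. Qed.

Lemma lin_top x y (v1 v2 : oneform) (vs : list oneform) (l : list nat) :
  ext ((fun g => x * v1 g + y * v2 g)%Z :: vs) l = (x * ext (v1 :: vs) l + y * ext (v2 :: vs) l)%Z.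
Proof.
  rewrite !ext_cons. rewrite <- sumZ_lin. apply sumZ_ext. intros; ring.
Qed.

Lemma lift (pre A B C : list oneform) a b :
  (forall l, ext A l = a * ext B l + b * ext C l)%Z ->
  forall l, ext (pre ++ A) l = (a * ext (pre ++ B) l + b * ext (pre ++ C) l)%Z.
Proof.
  induction pre as [|w pre IH]; intros H l; [exact (H l)|]. simpl app.
  rewrite !ext_cons. rewrite <- sumZ_lin. apply sumZ_ext. intros c _.
  rewrite IH by auto. ring.
Qed.

Lemma swap_any (pre : list oneform) (u v : oneform) (post : list oneform) (l : list nat) :
  ext (pre ++ u :: v :: post) l = (- ext (pre ++ v :: u :: post) l)%Z.
Proof.
  rewrite (lift pre (u :: v :: post) (v :: u :: post) (v :: u :: post) (-1) 0).
  - ring.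
  - intros; rewrite swap_top; ring.
Qed.

Lemma dup_any (mid : list oneform) : forall (pre : list oneform) (u : oneform) (post : list oneform) (l : list nat), ext (pre ++ u :: mid ++ u :: post) l = 0%Z.
Proof.
  induction mid as [|m mid IH]; intros pre u post l; simpl.
  - rewrite (lift pre (u :: u :: post) (u :: u :: post) (u :: u :: post) 0 0).
    + ring.
    + intros l'. pose proof (swap_top u u post l'). lia.
  - rewrite swap_any. replace (pre ++ m :: u :: mid ++ u :: post)
      with ((pre ++ m :: nil) ++ u :: mid ++ u :: post)
      by (rewrite <- app_assoc; reflexivity).
    rewrite IH. ring.
Qed.

Lemma add_any (pre : list oneform) (v1 v2 : oneform) (post : list oneform) (l : list nat) :
  ext (pre ++ (fun g => v1 g + v2 g)%Z :: post) l =
  (ext (pre ++ v1 :: post) l + ext (pre ++ v2 :: post) l)%Z.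
Proof.
  rewrite (lift pre _ (v1 :: post) (v2 :: post) 1 1).
  - ring.
  - intros l'. rewrite <- lin_top. f_equal. f_equal.
    apply functional_extensionality; intros; ring.
Qed.

Lemma zero_any (pre post : list oneform) (l : list nat) : ext (pre ++ (fun _ => 0%Z) :: post) l = 0%Z.
Proof.
  rewrite (lift pre _ post post 0 0).
  - ring.
  - intros l'. rewrite ext_cons. simpl. rewrite sumZ_zero; [ring|].
    intros; ring.
Qed.

Lemma van d i m : forall a (pre post : list oneform),
  (forall a', (a <= a' < a + m)%nat -> In (diff1 d a' (S a') i) post) ->
  forall l, ext (pre ++ diff1 d a (a + m) i :: post) l = 0%Z.
Proof.
  induction m as [|m IH]; intros a pre post H l.
  - replace (diff1 d a (a + 0) i) with (fun _ : nat => 0%Z).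
    + apply zero_any.
    + apply functional_extensionality; intros g. unfold diff1.
      rewrite Nat.add_0_r. lia.
  - replace (diff1 d a (a + S m) i) with
      (fun g => diff1 d a (S a) i g + diff1 d (S a) (S a + m) i g)%Z.
    + rewrite add_any. rewrite IH.
      * destruct (in_split _ _ (H a ltac:(lia))) as [p1 [p2 E]].
        rewrite E. rewrite dup_any. ring.
      * intros a' Ha'. apply H. lia.
    + apply functional_extensionality; intros g. unfold diff1.
      replace (S a + m)%nat with (a + S m)%nat by lia. lia.
Qed.

Definition Inv (d : nat) (Kl : list oneform) (done : list nat) (w : pform) : Prop :=
  forall p, In p w -> exists rest J, snd p = Kl ++ rest /\ length J = length done /\
    forall i, (i < d)%nat -> ~ In i J -> forall a, In a done -> In (diff1 d a (S a) i) rest.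

Lemma inv_step d eps L nmat Z Kl done a acc :
  Inv d Kl done acc -> Inv d Kl (done ++ a :: nil) (wedge acc (Pform d eps L nmat a Z)).
Proof.
  intros H p Hp. unfold wedge in Hp. apply in_flat_map in Hp.
  destruct Hp as [p1 [Hp1 Hp]]. apply in_map_iff in Hp. destruct Hp as [q [Eq Hq]].
  subst p. unfold Pform in Hq. apply in_map_iff in Hq. destruct Hq as [j [Eq Hj]].
  subst q. destruct (H p1 Hp1) as [rest [J [E1 [E2 E3]]]].
  exists (rest ++ map (fun i => diff1 d a (S a) i) (filter (fun i => negb (Nat.eqb i j)) (seq 0 d))).
  exists (J ++ j :: nil). simpl. rewrite E1. rewrite app_assoc. split; auto.
  split. { rewrite !length_app. simpl. lia. }
  intros i Hi HJ a' Ha'. apply in_or_app.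
  apply in_app_or in Ha'. destruct Ha' as [Ha'|Ha'].
  - left. apply E3; auto. intro; apply HJ; apply in_or_app; auto.
  - right. destruct Ha' as [<-|[]]. apply in_map. apply filter_In. split.
    + apply in_seq; lia.
    + destruct (Nat.eqb_spec i j); auto. subst. exfalso; apply HJ; apply in_or_app; right; left; auto.
Qed.

Lemma inv_fold d eps L nmat Z Kl ls : forall done acc,
  Inv d Kl done acc ->
  Inv d Kl (done ++ ls) (fold_left (fun acc a => wedge acc (Pform d eps L nmat a Z)) ls acc).
Proof.
  induction ls as [|a ls IH]; intros done acc H; simpl.
  - rewrite app_nil_r; auto.
  - replace (done ++ a :: ls) with ((done ++ a :: nil) ++ ls) by (rewrite <- app_assoc; auto).
    apply IH. apply inv_step; auto.
Qed.

Lemma pigeon d J : (length J < d)%nat -> exists i, (i < d)%nat /\ ~ In i J.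
Proof.
  intros H. destruct (classic (exists i, (i < d)%nat /\ ~ In i J)) as [E|E]; auto.
  exfalso.
  assert (incl (seq 0 d) J).
  { intros i Hi. apply in_seq in Hi. destruct (classic (In i J)); auto.
    exfalso; apply E; exists i; split; [lia|auto]. }
  pose proof (NoDup_incl_length (seq_NoDup d 0) H0). rewrite length_seq in H1. lia.
Qed.

Lemma ext_Omega d k eps L nmat Z : (1 <= k)%nat -> (k <= d)%nat ->
  forall p, In p (Omega d k eps L nmat Z) -> forall S, ext (snd p) S = 0%Z.
Proof.
  intros Hk Hkd p Hp S.
  assert (HI : Inv d (map (fun i => diff1 d O (k - 1) i) (seq 0 d)) (seq 0 (k - 1))
                 (Omega d k eps L nmat Z)).
  { unfold Omega. change (seq 0 (k - 1)) with (nil ++ seq 0 (k - 1)) at 1.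
    apply inv_fold. intros q Hq. destruct Hq as [<-|[]].
    exists nil, nil. simpl. rewrite app_nil_r. repeat split; auto.
    }
  destruct (HI p Hp) as [rest [J [E1 [E2 E3]]]].
  rewrite length_seq in E2.
  destruct (pigeon d J ltac:(lia)) as [i [Hi HJ]].
  assert (Hin : In (diff1 d O (k - 1) i) (map (fun i => diff1 d O (k - 1) i) (seq 0 d))).
  { apply in_map. apply in_seq. lia. }
  destruct (in_split _ _ Hin) as [p1 [p2 Ep]].
  rewrite E1, Ep, <- app_assoc. simpl.
  apply (van d i (k - 1) O p1 (p2 ++ rest)).
  intros a' Ha'. apply in_or_app; right. apply E3; auto. apply in_seq; lia.
Qed.

Lemma Csum_zero {A} (f : A -> Defs.C) ls : (forall x, In x ls -> f x = C0) -> Csum (map f ls) = C0.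
Proof.
  induction ls as [|x ls IH]; intros H; simpl; auto.
  rewrite H by (left; auto). rewrite IH by (intros; apply H; right; auto).
  unfold Cadd, C0; simpl. f_equal; ring.
Qed.

Lemma Cmul_0 c : Cmul c C0 = C0.
Proof. unfold Cmul, C0; simpl. f_equal; ring. Qed.

Lemma form_comp_zero d k eps L nmat Z S : (1 <= k)%nat -> (k <= d)%nat ->
  form_comp (Omega d k eps L nmat Z) S = C0.
Proof.
  intros Hk Hkd. unfold form_comp. apply Csum_zero. intros p Hp.
  rewrite (ext_Omega d k eps L nmat Z Hk Hkd p Hp S). apply Cmul_0.
Qed.

Lemma RInt_zero a b : RInt (fun _ => 0) a b = 0.
Proof.
  unfold RInt. destruct excluded_middle_informative as [H|H]; auto.
  pose proof (@RiemannInt_P15 a b 0 (epsilon H (fun _ => True))) as E.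
  unfold fct_cte in E. simpl in E. etransitivity; [exact E|ring].
Qed.

Lemma RlineInt_zero : RlineInt (fun _ => 0) = 0.
Proof.
  unfold RlineInt.
  set (P := fun l : R => forall e, 0 < e -> exists M, forall Rr, Rr > M ->
      Rabs (RInt (fun _ => 0) (- Rr) Rr - l) < e).
  assert (HP : P (epsilon (inhabits 0) P)).
  { apply epsilon_spec. exists 0. intros e He. exists 0. intros Rr _.
    rewrite RInt_zero. rewrite Rminus_0_r, Rabs_R0. auto. }
  set (l := epsilon (inhabits 0) P) in *.
  destruct (Req_dec l 0) as [E|E]; auto. exfalso.
  destruct (HP (Rabs l) (Rabs_pos_lt _ E)) as [M HM].
  specialize (HM (Rabs M + 1)).
  assert (Rabs M + 1 > M). { pose proof (Rle_abs M). lra. }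
  specialize (HM H). rewrite RInt_zero in HM.
  rewrite Rminus_0_l, Rabs_Ropp in HM. lra.
Qed.

Lemma IntAll_zero F : (forall Z, F Z = 0) -> forall cs Z, IntAll F cs Z = 0.
Proof.
  intros HF cs. induction cs as [|[[a i] re] cs IH]; intros Z; simpl; auto.
  replace (fun s => IntAll F cs (cupd Z a i (if re then (s, snd (Z a i)) else (fst (Z a i), s))))
    with (fun _ : R => 0).
  - apply RlineInt_zero.
  - apply functional_extensionality; intros s. rewrite IH; auto.
Qed.

Theorem mainTheorem5 (d k : nat) (nmat : nat -> nat -> nat) (eps L : R) :
  (1 <= d)%nat -> (1 <= k)%nat -> (k <= d)%nat -> 0 < eps -> eps < L ->
  (forall Phi : form0, compact_support d k Phi -> Wtilde d k eps L nmat Phi = C0)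
  /\
  (forall (Z : config) (S : list nat),
      Sorted lt S -> (forall g, In g S -> (g < k * d)%nat) ->
      form_comp (Omega d k eps L nmat Z) S = C0).
Proof.
  intros Hd Hk Hkd He HL. split.
  - intros Phi _.
    assert (HT : forall Z, top_coef d k eps L nmat Phi Z = C0).
    { intros Z. unfold top_coef. apply Csum_zero. intros S _.
      rewrite form_comp_zero by auto. rewrite !Cmul_0. reflexivity. }
    unfold Wtilde. rewrite !(IntAll_zero _ (fun Z => f_equal fst (HT Z))).
    rewrite !(IntAll_zero _ (fun Z => f_equal snd (HT Z))). reflexivity.
  - intros Z S _ _. apply form_comp_zero; auto.
Qed.
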